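(* Let $f\in\mathbb{C}[h]$ and let $V$ be a simple $\mathcal{H}(f)$-module with $\dim V=n<\infty$. If $x^nV\neq 0$, then $V\cong A'_{\mathcal{H}(f)}(\lambda,\dot z,a)$ for some $\dot z\in\mathbb{C}$, $a\in\mathbb{C}^*$ and $\lambda\in S_f$ with $|\lambda|=n$.
   Context: For $f(h)\in\mathbb{C}[h]$, $\mathcal{H}(f)$ is the unital associative $\mathbb{C}$-algebra generated by $x,y,h$ with relations $hx=xf(h)$, $yh=f(h)y$, $yx-xy=f(h)-h$. $S_f$ is the set of maps $\lambda:\mathbb{Z}\to\mathbb{C}$ with $f(\lambda(i))=\lambda(i+1)$ for all $i$; $|\lambda|$ is the nonnegative generator of the subgroup $\{m\in\mathbb{Z}\mid\lambda(i+m)=\lambda(i)\ \forall i\}$. For $\lambda\in S_f$ with $|\lambda|=m\neq0$, $\dot z\in\mathbb{C}$, $a\in\mathbb{C}^*$: $A'_{\mathcal{H}(f)}(\lambda,\dot z,a)$ is the quotient of $\mathbb{C}[t,t^{-1}]$ by $\mathbb{C}[t,t^{-1}](t^m-a)$, with $\mathcal{H}(f)$-action induced by $ht^i=\lambda(i)t^i$, $xt^i=t^{i+1}$, $yt^i=(\lambda(i)+\dot z)t^{i-1}$ ($i\in\mathbb{Z}$). *)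

(* Defs.v *)
From HB Require Import structures.
From mathcomp Require Import all_boot all_order all_algebra.
Set Implicit Arguments. Unset Strict Implicit. Unset Printing Implicit Defensive.
Import Order.TTheory GRing.Theory Num.Theory.
Local Open Scope ring_scope.

(* Conventions: a finite-dimensional module V over H(f) with dim V = n is
   represented (after choosing a basis) by C^n = column vectors 'cV[C]_n,
   with the generators x, y, h acting by left multiplication by the matrices
   X, Y, H.  Hence the action of a product ab is (action a) *m (action b). *)

Definition peval_mx (C : comNzRingType) (n : nat) (p : {poly C}) (A : 'M[C]_n)
  : 'M[C]_n := \sum_(i < size p) p`_i *: A ^+ i.

(* X, Y, H satisfy the defining relations of H(f):
   hx = x f(h),  yh = f(h) y,  yx - xy = f(h) - h *)
Definition Hf_module (C : comNzRingType) (f : {poly C}) (n : nat)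
  (X Y H : 'M[C]_n) : Prop :=
  [/\ H *m X = X *m peval_mx f H,
      Y *m H = peval_mx f H *m Y &
      Y *m X - X *m Y = peval_mx f H - H].

(* the column space of W (a subspace of C^n) is stable under M *)
Definition mx_invariant (C : fieldType) (n : nat) (M W : 'M[C]_n) : bool :=
  (((M *m W)^T) <= W^T)%MS.

Definition simple_mod (C : fieldType) (n : nat) (X Y H : 'M[C]_n) : Prop :=
  (0 < n)%N /\
  forall W : 'M[C]_n,
    mx_invariant X W -> mx_invariant Y W -> mx_invariant H W ->
    \rank W = 0%N \/ \rank W = n.

Definition in_Sf (C : comNzRingType) (f : {poly C}) (lam : int -> C) : Prop :=
  forall i : int, f.[lam i] = lam (i + 1).

Definition is_period (C : Type) (lam : int -> C) (k : int) : Prop :=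
  forall i : int, lam (i + k) = lam i.

Definition lam_size (C : Type) (lam : int -> C) (m : nat) : Prop :=
  is_period lam m%:Z /\ forall k : int, is_period lam k -> (m%:Z %| k)%Z.

(* The module A'(lam, zdot, a) = C[t,t^-1]/(t^m - a), m = |lam| > 0,
   in the basis (images of) t^0, ..., t^(m-1).  The image of t^i (i in Z)
   is a^(i div m) t^(i mod m). *)
Definition tvec (C : fieldType) (m : nat) (a : C) (i : int) : 'cV[C]_m :=
  \col_(j < m) (if (j : nat) == absz (i %% m%:Z)%Z then a ^ (i %/ m%:Z)%Z else 0).

(* matrix of x : column j is the image of x t^j = t^(j+1) *)
Definition Ap_X (C : fieldType) (m : nat) (a : C) : 'M[C]_m :=
  \matrix_(k < m, j < m) tvec m a ((j : nat)%:Z + 1) k ord0.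

Definition Ap_H (C : fieldType) (m : nat) (lam : int -> C) (a : C) : 'M[C]_m :=
  \matrix_(k < m, j < m) (lam (j : nat)%:Z *: tvec m a (j : nat)%:Z) k ord0.

Definition Ap_Y (C : fieldType) (m : nat) (lam : int -> C) (zd a : C)
  : 'M[C]_m :=
  \matrix_(k < m, j < m)
     ((lam (j : nat)%:Z + zd) *: tvec m a ((j : nat)%:Z - 1)) k ord0.

Definition mod_iso (C : fieldType) (n : nat) (X Y H X' Y' H' : 'M[C]_n) : Prop :=
  exists P : 'M[C]_n,
    [/\ P \in unitmx, P *m X = X' *m P, P *m Y = Y' *m P & P *m H = H' *m P].

(* Main.v *)
Require Import Defs.
From HB Require Import structures.
From mathcomp Require Import all_boot all_order all_algebra zify.
Import Order.TTheory GRing.Theory Num.Theory.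
Local Open Scope ring_scope.

Lemma peval_hornerE (C : comNzRingType) (n : nat) (p : {poly C}) (A : 'M[C]_n.+1) :
  peval_mx p A = horner_mx A p.
Proof.
rewrite /peval_mx -[X in horner_mx _ X]coefK poly_def rmorph_sum; apply: eq_bigr => i _.
rewrite -mul_polyC rmorphM /= horner_mx_C rmorphXn /= horner_mx_X.
by rewrite -mulmxE mul_scalar_mx.
Qed.

Lemma eig_horner (C : comNzRingType) (n m : nat) (A : 'M[C]_n.+1) (V : 'M[C]_(n.+1, m))
  (mu : C) (p : {poly C}) :
  A *m V = mu *: V -> horner_mx A p *m V = p.[mu] *: V.
Proof.
move=> hA; elim/poly_ind: p => [|q c IH].
  by rewrite rmorph0 mul0mx horner0 scale0r.
rewrite rmorphD rmorphM /= horner_mx_X horner_mx_C mulmxDl -mulmxE -mulmxA hA.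
rewrite -scalemxAr IH scalerA mul_scalar_mx hornerMXaddC scalerDl.
by rewrite mulrC.
Qed.

Lemma modz_facts (i : int) (n : nat) :
  (absz (i %% n.+1)%Z < n.+1)%N /\ Posz (absz (i %% n.+1)%Z) = (i %% n.+1)%Z.
Proof. split; lia. Qed.

Lemma PoszS (r : nat) : (Posz r + 1 = Posz r.+1)%R.
Proof. lia. Qed.

Lemma m1E (n : nat) : ((0 : int) - 1 = (-1) * (n.+1)%:Z + n%:Z)%R.
Proof. lia. Qed.

Lemma m1div (n : nat) : (((0 : int) - 1) %/ n.+1)%Z = -1.
Proof.
rewrite (m1E n) divzMDl // divz_small ?addr0 //; apply/andP; split; lia.
Qed.

Lemma m1mod (n : nat) : absz (((0 : int) - 1) %% n.+1)%Z = n.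
Proof. by rewrite (m1E n) modzMDl modz_small //; apply/andP; split; lia. Qed.

Lemma PoszSB (r : nat) : (Posz r.+1 - 1 = Posz r)%R.
Proof. lia. Qed.

Section Main.
Variables (C : numClosedFieldType) (f : {poly C}) (n : nat) (X Y H : 'M[C]_n.+1).
Hypothesis hHX : H *m X = X *m horner_mx H f.
Hypothesis hYH : Y *m H = horner_mx H f *m Y.
Hypothesis hYX : Y *m X - X *m Y = horner_mx H f - H.
Hypothesis simple : forall W : 'M[C]_n.+1,
  mx_invariant X W -> mx_invariant Y W -> mx_invariant H W ->
  \rank W = 0%N \/ \rank W = n.+1.
Hypothesis Xn : X ^+ n.+1 != 0.

Lemma inv_of (M W B : 'M[C]_n.+1) : M *m W = W *m B -> mx_invariant M W.
Proof. by move=> h; rewrite /mx_invariant h trmx_mul submxMl. Qed.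

Lemma schur (M : 'M[C]_n.+1) : M *m X = X *m M -> M *m Y = Y *m M ->
  M *m H = H *m M -> exists a, M = a%:M.
Proof.
move=> cX cY cH.
have [a ha] := eigenvalue_closed M^T (ltn0Sn n).
set E := eigenspace M^T a.
have inv N : N *m M = M *m N -> mx_invariant N E^T.
  move=> cN; rewrite /mx_invariant trmx_mul trmxK.
  apply: comm_mx_stable_eigenspace.
  by rewrite /comm_mx -!trmx_mul cN.
have [] := simple _ (inv _ (esym cX)) (inv _ (esym cY)) (inv _ (esym cH)); rewrite mxrank_tr.
  by move/eqP; rewrite mxrank_eq0 (negbTE ha).
move=> hr.
have : (1%:M <= E)%MS by rewrite sub1mx /row_full hr.
move/eigenspaceP; rewrite mul1mx => hM.
by exists a; rewrite -[M]trmxK hM scalemx1 tr_scalar_mx.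
Qed.

Lemma YXE : Y *m X = X *m Y + (horner_mx H f - H).
Proof. by rewrite -hYX addrC subrK. Qed.

Lemma central : exists z, X *m Y = H + z%:M.
Proof.
have [z hz] : exists z, X *m Y - H = z%:M.
  apply: schur.
  - rewrite mulmxBl mulmxBr hHX -!mulmxA YXE mulmxDr mulmxBr mulmxA.
    by rewrite [X *m horner_mx H f - _]addrC addrA addrK.
  - rewrite mulmxBl mulmxBr -!mulmxA.
    rewrite [Y *m (X *m Y)]mulmxA YXE mulmxDl mulmxBl hYH -mulmxA.
    by rewrite [horner_mx H f *m Y - _]addrC addrA addrK.
  - rewrite mulmxBl mulmxBr -!mulmxA hYH [H *m (X *m Y)]mulmxA hHX !mulmxA.
    by [].
by exists z; rewrite -hz addrC subrK.
Qed.


Definition g (q : {poly C}) := q \Po f.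
Definition F (c : C) := f.[c].

Lemma hcomm p : horner_mx H p *m X = X *m horner_mx H (p \Po f).
Proof.
elim/poly_ind: p => [|q c IH]; first by rewrite comp_poly0 rmorph0 mul0mx mulmx0.
rewrite comp_polyD comp_polyM comp_polyX comp_polyC !rmorphD !rmorphM /=.
rewrite horner_mx_X !horner_mx_C -!mulmxE.
by rewrite mulmxDl mulmxDr -mulmxA hHX mulmxA IH -!mulmxA scalar_mxC.
Qed.

Lemma hcommk k p : horner_mx H p *m X ^+ k = X ^+ k *m horner_mx H (iter k g p).
Proof.
elim: k => [|k IH]; first by rewrite expr0 mulmx1 mul1mx.
rewrite exprSr -mulmxE mulmxA IH -[LHS]mulmxA hcomm.
by rewrite mulmxA.
Qed.

Lemma iter_eval k x : (iter k g 'X).[x] = iter k F x.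
Proof.
elim: k x => [|k IH] x; first by rewrite hornerX.
by rewrite iterS /g horner_comp IH iterSr.
Qed.

Lemma HXk k : H *m X ^+ k = X ^+ k *m horner_mx H (iter k g 'X).
Proof. by rewrite -hcommk horner_mx_X. Qed.

Lemma YXE2 : exists z, Y *m X = horner_mx H (f + z%:P).
Proof.
have [z hz] := central.
exists z; rewrite YXE hz rmorphD /= horner_mx_C.
by rewrite addrC addrA subrK addrC.
Qed.

Lemma X_unit : X \in unitmx.
Proof.
pose r k := \rank (X ^+ k).
have dec k : (r k.+1 <= r k)%N.
  by rewrite /r exprSr -mulmxE mxrankM_maxl.
have [k kle hk] : exists2 k, (k <= n)%N & r k.+1 = r k.
  case: (boolP [exists k : 'I_n.+1, r k.+1 == r k]).
    by move/existsP => [k /eqP hk]; exists k => //; rewrite -ltnS.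
  rewrite negb_exists => /forallP hne.
  have lt k : (k <= n)%N -> (r k.+1 < r k)%N.
    move=> kle; have := hne (Ordinal (kle : (k < n.+1)%N)) => /= hk.
    by rewrite ltn_neqAle hk dec.
  have bnd k : (k <= n.+1)%N -> (r k + k <= n.+1)%N.
    elim: k => [|k IH] kle.
      by rewrite addn0 /r expr0 mxrank1.
    have := lt k kle; have := IH (ltnW kle); lia.
  have : r n.+1 = 0%N by have := bnd n.+1 (leqnn _); lia.
  by move/eqP; rewrite /r mxrank_eq0 (negbTE Xn).
have sub1 : ((X ^+ k.+1)^T <= (X ^+ k)^T)%MS.
  by rewrite exprSr -mulmxE trmx_mul submxMl.
have sub2 : ((X ^+ k)^T <= (X ^+ k.+1)^T)%MS.
  by rewrite -(mxrank_leqif_sup sub1).2 !mxrank_tr -/(r k) -/(r k.+1) hk.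
have [D hD] := submxP sub2.
have eD : X ^+ k = X ^+ k.+1 *m D^T by rewrite -[X ^+ k]trmxK hD trmx_mul trmxK.
have [z hz] := YXE2.
have iX : mx_invariant X (X ^+ k).
  by apply: (@inv_of _ _ X); rewrite mulmxE -exprS exprSr.
have iH : mx_invariant H (X ^+ k) by apply: inv_of; apply: HXk.
have iY : mx_invariant Y (X ^+ k).
  apply: inv_of; rewrite {1}eD exprS -mulmxE !mulmxA hz hcommk -mulmxA; reflexivity.
have [/eqP|] := simple _ iX iY iH.
  rewrite mxrank_eq0 => /eqP X0; case/negP: Xn.
  have e := exprD X (n - k).+1 k; rewrite addSn subnK // in e.
  by rewrite e X0 mulr0.
move=> hr.
have : X ^+ k.+1 \in unitmx by rewrite -row_free_unit /row_free -/(r k.+1) hk /r hr.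
by rewrite exprSr -mulmxE unitmx_mul => /andP[].
Qed.


Lemma Xinj (u : 'cV_n.+1) : X *m u = 0 -> u = 0.
Proof. by move=> h; have := @mulKmx C n.+1 1 X X_unit u; rewrite h mulmx0. Qed.

Lemma Xkinj k (u : 'cV_n.+1) : X ^+ k *m u = 0 -> u = 0.
Proof.
elim: k u => [|k IH] u; first by rewrite expr0 mul1mx.
by rewrite exprS -mulmxE -mulmxA => /Xinj /IH.
Qed.

Lemma eig_root (w : 'cV_n.+1) mu : w != 0 -> H *m w = mu *: w ->
  root (char_poly H^T) mu.
Proof.
move=> w0 hw; rewrite -eigenvalue_root_char; apply/eigenvalueP.
exists w^T; last by rewrite trmx_eq0.
by rewrite -trmx_mul hw linearZ.
Qed.

Lemma vk_eig (w : 'cV_n.+1) mu k : H *m w = mu *: w ->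
  H *m (X ^+ k *m w) = iter k F mu *: (X ^+ k *m w).
Proof.
move=> hw; rewrite mulmxA HXk -mulmxA (eig_horner _ _ _ _ _ _ _ hw) iter_eval.
by rewrite -scalemxAr.
Qed.


Lemma colsE (A B : 'M[C]_n.+1) : (forall j, col j A = col j B) -> A = B.
Proof. by move=> h; apply/matrixP => i j; move: (h j) => /colP /(_ i); rewrite !mxE. Qed.

Lemma col_mulmx (A B : 'M[C]_n.+1) j : col j (A *m B) = A *m col j B.
Proof. by rewrite !colE mulmxA. Qed.

Lemma iso_of (A B W : 'M[C]_n.+1) : W \in unitmx -> A *m W = W *m B ->
  invmx W *m A = B *m invmx W.
Proof.
move=> WU h.
rewrite -[invmx W *m A]mulmx1 -(mulmxV WU) !mulmxA -[invmx W *m A *m W]mulmxA h.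
by rewrite mulmxA mulVmx // mul1mx.
Qed.

Lemma main : exists (lam : int -> C) (zd a : C),
    [/\ a != 0, in_Sf f lam, lam_size lam n.+1 &
        mod_iso X Y H (Ap_X n.+1 a) (Ap_Y n.+1 lam zd a) (Ap_H n.+1 lam a)].
Proof.
have [mu0 [w0 [w00 hw0]]] : exists mu, exists w : 'cV_n.+1, w != 0 /\ H *m w = mu *: w.
  have [mu /eigenvalueP [v hv v0]] := eigenvalue_closed H^T (ltn0Sn n).
  exists mu, v^T; split; first by rewrite trmx_eq0.
  by rewrite -[H]trmxK -trmx_mul hv linearZ.
have vnz (w : 'cV_n.+1) k : w != 0 -> X ^+ k *m w != 0.
  by move=> wn0; apply/eqP => /Xkinj /eqP; rewrite (negbTE wn0).
have [i [j [ij hij]]] : exists i j, (i < j)%N /\ iter i F mu0 = iter j F mu0.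
  set s := [seq iter k F mu0 | k <- iota 0 n.+2].
  have : ~~ uniq s.
    apply/negP => us.
    suff : all (root (char_poly H^T)) s.
      move/(max_poly_roots (monic_neq0 (char_poly_monic H^T)))/(_ us).
      by rewrite size_char_poly size_map size_iota ltnn.
    apply/allP => x /mapP [k _ ->].
    apply: (@eig_root (X ^+ k *m w0)); last exact: vk_eig.
    exact: vnz.
  case/(uniqPn 0) => i [j [ij js hs]]; exists i, j; split => //.
  move: js hs; rewrite /s size_map size_iota => js.
  rewrite !(nth_map 0%N) ?size_iota ?(ltn_trans ij) // !nth_iota ?(ltn_trans ij) //.
pose mu := iter i F mu0.
have hper : iter (j - i)%N F mu = mu by rewrite /mu -iterD subnK ?(ltnW ij).
have exP : exists q, (0 < q)%N && (iter q F mu == mu).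
  by exists (j - i)%N; rewrite subn_gt0 ij hper eqxx.
case: (ex_minnP exP) => p /andP [p0 /eqP hp] pmin.
have w1n0 := vnz _ i w00.
have hw1 : H *m (X ^+ i *m w0) = mu *: (X ^+ i *m w0) by exact: vk_eig.
have dist k1 k2 : (k1 < p)%N -> (k2 < p)%N -> iter k1 F mu = iter k2 F mu -> k1 = k2.
  wlog lt12 : k1 k2 / (k1 <= k2)%N.
    move=> hw h1 h2 he; case: (leqP k1 k2) => hl; first exact: hw.
    by apply/esym/hw => //; apply: ltnW.
  move=> h1 h2 he; case: (ltngtP k1 k2) => // hl.
  - have e : iter (p - k2 + k1)%N F mu = mu.
      by rewrite iterD he -iterD subnK ?(ltnW h2) ?hp.
    have := pmin (p - k2 + k1)%N; rewrite e eqxx andbT.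
    have hpos : (0 < p - k2 + k1)%N by lia.
    by rewrite hpos => /(_ isT); lia.
  - by move: lt12; rewrite leqNgt hl.
have pn1 : (p <= n.+1)%N.
  set s := [seq iter k F mu | k <- iota 0 p].
  have us : uniq s.
    rewrite map_inj_in_uniq ?iota_uniq // => k1 k2.
    by rewrite !mem_iota !add0n; apply: dist.
  suff : all (root (char_poly H^T)) s.
    move/(max_poly_roots (monic_neq0 (char_poly_monic H^T)))/(_ us).
    by rewrite size_char_poly size_map size_iota.
  apply/allP => x /mapP [k _ ->].
  apply: (@eig_root (X ^+ k *m (X ^+ i *m w0))); last exact: vk_eig.
  exact: vnz.
set E := eigenspace H^T mu.
have hE : H *m E^T = mu *: E^T.
  have : (E <= E)%MS by [].
  move/eigenspaceP => h; by rewrite -[H]trmxK -trmx_mul h linearZ.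
have stab : stablemx E (X ^+ p)^T.
  have e1 : H *m (X ^+ p *m E^T) = mu *: (X ^+ p *m E^T).
    rewrite mulmxA HXk -mulmxA (eig_horner _ _ _ _ _ _ _ hE) iter_eval hp.
    by rewrite -scalemxAr.
  apply/eigenspaceP; have := congr1 trmx e1.
  rewrite linearZ /= (trmx_mul H) (trmx_mul (X ^+ p)) trmxK => ->.
  by [].
have En0 : E != 0.
  apply/eigenvalueP; exists (X ^+ i *m w0)^T; last by rewrite trmx_eq0.
  by rewrite -trmx_mul hw1 linearZ.
have rE : (0 < \rank E)%N by rewrite lt0n mxrank_eq0.
have [a /eigenvalueP [zz hzz zz0]] := eigenvalue_closed (conjmx (row_base E) (X ^+ p)^T) rE.
have : (zz *m row_base E <= eigenspace (X ^+ p)^T a)%MS.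
  rewrite -sub_eigenspace_conjmx ?stablemx_row_base ?row_base_free //.
  by apply/eigenspaceP.
set u := zz *m row_base E => uQ.
have u0 : u != 0 by rewrite mulmx_free_eq0 ?row_base_free.
have uE : (u <= E)%MS by rewrite mulmx_sub // eq_row_base.
pose w := u^T.
have w0n : w != 0 by rewrite trmx_eq0.
have Hw : H *m w = mu *: w.
  by move/eigenspaceP: uE => h; rewrite -[H]trmxK -trmx_mul h linearZ.
have Qw : X ^+ p *m w = a *: w.
  by move/eigenspaceP: uQ => h; rewrite -[X ^+ p]trmxK -trmx_mul h linearZ.
have a0 : a != 0.
  apply/eqP => a00; move: Qw; rewrite a00 scale0r => /Xkinj /eqP.
  by rewrite (negbTE w0n).
clearbody w; clear hzz zz0 uQ uE u0.
have [z hz] := YXE2.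
pose v k := X ^+ k *m w.
have vH k : H *m v k = iter k F mu *: v k by exact: vk_eig.
have v0 : v 0%N = w by rewrite /v expr0 mul1mx.
have vadd k : v (k + p)%N = a *: v k.
  by rewrite /v exprD -mulmxE -mulmxA Qw scalemxAr.
have vmod k : v k = a ^+ (k %/ p) *: v (k %% p)%N.
  rewrite {1}(divn_eq k p); elim: (k %/ p)%N => [|q IH].
    by rewrite mul0n add0n expr0 scale1r.
  have -> : (q.+1 * p + k %% p = (q * p + k %% p) + p)%N by rewrite mulSn; lia.
  by rewrite vadd IH scalerA exprS.
have vY k : Y *m v k.+1 = (iter k.+1 F mu + z) *: v k.
  rewrite /v exprS -mulmxE !mulmxA hz -mulmxA (eig_horner _ _ _ _ _ _ _ (vH k)).
  by rewrite hornerD hornerC iterS.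
have vY0 : Y *m w = (a^-1 * (mu + z)) *: v p.-1.
  have -> : w = a^-1 *: v p by rewrite -[p]add0n vadd v0 scalerA mulVf // scale1r.
  by rewrite -scalemxAr -{1}(prednK p0) vY prednK // hp scalerA.
pose W : 'M[C]_n.+1 := \matrix_(r, c) (if ((c : nat) < p)%N then v c r 0 else 0).
have colW (c : 'I_n.+1) : col c W = if (c < p)%N then v c else 0.
  by apply/colP => r; rewrite !mxE; case: ifP => _; rewrite ?mxE.
have inW_v k : ((v k)^T <= W^T)%MS.
  rewrite vmod linearZ /= scalemx_sub //.
  have kp : (k %% p < p)%N by rewrite ltn_mod.
  have kn : (k %% p < n.+1)%N by apply: leq_trans pn1.
  have -> : v (k %% p)%N = col (Ordinal kn) W by rewrite colW /= kp.
  by rewrite tr_col row_sub.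
have inv_cols (M : 'M[C]_n.+1) : (forall k, ((M *m v k)^T <= W^T)%MS) -> mx_invariant M W.
  move=> h; rewrite /mx_invariant; apply/row_subP => c.
  rewrite -tr_col col_mulmx colW; case: ifP => _; first exact: h.
  by rewrite mulmx0 trmx0 sub0mx.
have iX : mx_invariant X W.
  apply: inv_cols => k; rewrite /v mulmxA.
  have -> : X *m X ^+ k = X ^+ k.+1 by rewrite exprS mulmxE.
  exact: (inW_v k.+1).
have iH : mx_invariant H W.
  by apply: inv_cols => k; rewrite vH linearZ /= scalemx_sub.
have iY : mx_invariant Y W.
  apply: inv_cols => -[|k]; first by rewrite v0 vY0 linearZ /= scalemx_sub.
  by rewrite vY linearZ /= scalemx_sub.
have hr : \rank W = n.+1.
  have [/eqP|//] := simple _ iX iY iH.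
    rewrite mxrank_eq0 => /eqP W0.
    have := colW (Ordinal (ltn0Sn n)); rewrite W0 /= p0 v0 => /esym/eqP.
    have -> : col (Ordinal (ltn0Sn n)) (0 : 'M[C]_n.+1) = 0 by apply/colP => r; rewrite !mxE.
    by rewrite (negbTE w0n).
have pn : p = n.+1.
  apply/eqP; rewrite eqn_leq pn1 /=.
  pose Ap : 'M[C]_(p, n.+1) := \matrix_(k, r) v k r 0.
  have sub : (W^T <= Ap)%MS.
    apply/row_subP => c; rewrite -tr_col colW; case: ifP => cp.
      have -> : (v c)^T = row (Ordinal cp) Ap by apply/rowP => r; rewrite !mxE.
      exact: row_sub.
    by rewrite trmx0 sub0mx.
  by rewrite -hr -mxrank_tr (leq_trans (mxrankS sub)) ?rank_leq_row.
have WU : W \in unitmx by rewrite -row_free_unit /row_free hr.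
subst p.
have colWn (c : 'I_n.+1) : col c W = v c by rewrite colW ltn_ord.
have Wt (i0 : int) : W *m tvec n.+1 a i0 = a ^ (i0 %/ n.+1)%Z *: v (absz (i0 %% n.+1)%Z).
  have hk : (absz (i0 %% n.+1)%Z < n.+1)%N by lia.
  have -> : tvec n.+1 a i0 = a ^ (i0 %/ n.+1)%Z *: delta_mx (Ordinal hk) 0.
    apply/colP => r; rewrite !mxE eqxx andbT.
    have -> : ((r : nat) == absz (i0 %% n.+1)%Z) = (r == Ordinal hk) by [].
    by case: (_ == _); rewrite ?mulr1 ?mulr0.
  by rewrite -scalemxAr -colE colWn.
have Wtn (k : nat) : W *m tvec n.+1 a k%:Z = v k.
  by rewrite Wt divz_nat modz_nat /= -exprnP -vmod.
pose lam (i0 : int) := iter (absz (i0 %% n.+1)%Z) F mu.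
have lamc (c : nat) : (c < n.+1)%N -> lam c = iter c F mu.
  by move=> hc; rewrite /lam modz_nat /= modn_small.
exists lam, z, a; split => //.
- move=> i0; rewrite /lam.
  have [hr0 e1] := modz_facts i0 n.
  move: hr0 e1; set r := absz _ => hr0 e1.
  rewrite -modzDml -e1 PoszS modz_nat /=.
  have -> : f.[iter r F mu] = iter r.+1 F mu by [].
  case: (ltngtP r.+1 n.+1) => hrn; first by rewrite modn_small.
    by move: hrn; rewrite ltnS leqNgt hr0.
  by rewrite hrn modnn hp.
- split.
    by move=> i0; rewrite /lam modzDr.
  move=> k hk; have := hk 0; rewrite add0r /lam mod0z /=.
  have hr0 : (absz (k %% n.+1)%Z < n.+1)%N by lia.
  move: hr0; set r := absz _ => hr0 hkr.
  case: (posnP r) => r0.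
    by apply/dvdz_mod0P; move: r0; rewrite /r; lia.
  have := pmin r; rewrite r0 hkr eqxx /= => /(_ isT).
  by rewrite leqNgt hr0.
- exists (invmx W); split; first by rewrite unitmx_inv.
  + apply: iso_of => //; apply: colsE => c; rewrite !col_mulmx colWn.
    have -> : col c (Ap_X n.+1 a) = tvec n.+1 a (Posz c.+1).
      by apply/colP => r; rewrite !mxE PoszS.
    rewrite Wtn /v [X ^+ c.+1]exprS; exact: mulmxA.
  + apply: iso_of => //; apply: colsE => c; rewrite !col_mulmx colWn.
    have -> : col c (Ap_Y n.+1 lam z a) = (lam c + z) *: tvec n.+1 a (Posz c - 1).
      by apply/colP => r; rewrite !mxE.
    case: c => [[|c] hc].
      change (Y *m v 0%N = W *m ((lam 0 + z) *: tvec n.+1 a (0 - 1))).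
      rewrite v0 vY0 -scalemxAr Wt (lamc _ hc) m1div m1mod exprN1.
      by rewrite scalerA mulrC.
    change (Y *m v c.+1 = W *m ((lam c.+1 + z) *: tvec n.+1 a (Posz c.+1 - 1))).
    by rewrite -scalemxAr PoszSB Wtn vY (lamc _ hc).
  + apply: iso_of => //; apply: colsE => c; rewrite !col_mulmx colWn.
    have -> : col c (Ap_H n.+1 lam a) = lam c *: tvec n.+1 a (Posz c).
      by apply/colP => r; rewrite !mxE.
    rewrite -scalemxAr Wtn vH (lamc _ (ltn_ord c)).
    by [].
Qed.

End Main.

Theorem lemma9 (C : numClosedFieldType) (f : {poly C}) (n : nat)
  (X Y H : 'M[C]_n) :
  Hf_module f X Y H -> simple_mod X Y H -> X ^+ n != 0 ->
  exists (lam : int -> C) (zd a : C),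
    [/\ a != 0, in_Sf f lam, lam_size lam n &
        mod_iso X Y H (Ap_X n a) (Ap_Y n lam zd a) (Ap_H n lam a)].
Proof.
case: n X Y H => [|n] X Y H hm [n0 hs] Xn; first by [].
case: hm; rewrite !peval_hornerE => h1 h2 h3.
exact: (@main C f n X Y H h1 h2 h3 hs Xn).
Qed.
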